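(* Let $k \in \mathbb{N}$. The set of $\mathcal{P}$-positions of the Wythoff variant with terminal set $T_k = \{(x,y) \in \mathbb{Z}_{\ge 0}^2 : x+y \le k\}$ is exactly $P_k = T_k \cup \{(b_n,a_n) : n \in \mathbb{N}\} \cup \{(a_n,b_n) : n \in \mathbb{N}\}$.
   Context: Positions are pairs $(x,y) \in \mathbb{Z}_{\ge 0}^2$. In the Wythoff variant with terminal set $T_k$, from a position $(x,y) \notin T_k$ a move goes to any position in $\{(u,y) : 0 \le u < x\} \cup \{(x,v) : 0 \le v < y\} \cup \{(x-t,y-t) : 1 \le t \le \min(x,y)\}$ (horizontal, vertical, and diagonal queen moves); positions in $T_k$ have no moves. Players alternate; a player with no move loses (the player who moves into $T_k$ wins). A $\mathcal{P}$-position is one from which the previous player wins with optimal play; equivalently a position is $\mathcal{P}$ iff every move from it leads to a non-$\mathcal{P}$ position. Sequences: Fibonacci numbers $F_1 = F_2 = 1$, $F_{i+2} = F_{i+1} + F_i$. Let $\sigma$ be the substitution on finite sequences over $\{1,2\}$ replacing each entry $1$ by $2$ and each entry $2$ by $2,1$. Let $C_{1,1} = (1)$, $C_{i+1,1} = \sigma(C_{i,1})$. For $i \in \mathbb{N}$ let $C_i^{(k)}$ be the concatenation of $k$ copies of $C_{i,1}$. Let $(c_n)_{n \in \mathbb{N}}$ be the concatenation of $C_1^{(k)}, C_2^{(k)}, C_3^{(k)}, \dots$ in order, $d_n = c_n + 1$, $a_1 = k+1$, $a_n = k+1 + \sum_{i=1}^{n-1} c_i$, $b_1 = 2k+2$,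 $b_n = 2k+2 + \sum_{i=1}^{n-1} d_i$. *)

(* Defs.v *)
From mathcomp Require Import all_boot.
Set Implicit Arguments. Unset Strict Implicit. Unset Printing Implicit Defensive.

Definition terminal (k x y : nat) : bool := x + y <= k.

Definition queen_moves (x y : nat) : seq (nat * nat) :=
  [seq (u, y) | u <- iota 0 x] ++
  [seq (x, v) | v <- iota 0 y] ++
  [seq (x - t, y - t) | t <- iota 1 (minn x y)].

(* P-status computed with fuel; every move strictly decreases x + y, so
   fuel = x + y suffices. *)
Fixpoint isP_fuel (k fuel x y : nat) : bool :=
  if terminal k x y then true
  else match fuel with
       | 0 => true (* unreachable: fuel >= x + y > k >= 0 *)
       | f.+1 => all (fun p => ~~ isP_fuel k f p.1 p.2) (queen_moves x y)
       end.

Definition isP (k x y : nat) : bool := isP_fuel k (x + y) x y.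

Definition sigma (s : seq nat) : seq nat :=
  flatten [seq (if e == 1 then [:: 2] else [:: 2; 1]) | e <- s].

(* Cw i = C_{i,1} for i >= 1 (Cw 0 is junk, equal to C_{1,1}). *)
Definition Cw (i : nat) : seq nat := iter i.-1 sigma [:: 1].

Definition Cblock (k i : nat) : seq nat := flatten (nseq k (Cw i)).

Definition cprefix (k m : nat) : seq nat :=
  flatten [seq Cblock k i | i <- iota 1 m].

(* c_n (1-indexed, n >= 1); for k >= 1 every block is nonempty, so the
   first n blocks contain at least n entries. *)
Definition c (k n : nat) : nat := nth 0 (cprefix k n) n.-1.

Definition d (k n : nat) : nat := c k n + 1.

Definition a (k n : nat) : nat := k + 1 + \sum_(1 <= i < n) c k i.

Definition b (k n : nat) : nat := 2 * k + 2 + \sum_(1 <= i < n) d k i.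

(* Main.v *)
Require Import Defs.
From mathcomp Require Import all_boot zify.
From Stdlib Require Import Classical.
Set Implicit Arguments. Unset Strict Implicit. Unset Printing Implicit Defensive.

Definition in12 (e : nat) : bool := (e == 1) || (e == 2).

Lemma sigma_cat s1 s2 : sigma (s1 ++ s2) = sigma s1 ++ sigma s2.
Proof. by rewrite /sigma map_cat flatten_cat. Qed.

Lemma sigma_cons e s : sigma (e :: s) = (if e == 1 then [:: 2] else [:: 2; 1]) ++ sigma s.
Proof. by []. Qed.

Lemma sigma_all s : all in12 (sigma s).
Proof. elim: s => [|e s IH] //=; rewrite sigma_cons all_cat IH andbT; by case: ifP. Qed.

Lemma Cw_all i : all in12 (Cw i).
Proof. rewrite /Cw; case: i.-1 => [|j]; [by [] | rewrite iterS; exact: sigma_all]. Qed.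

Lemma Cw_S i : 1 <= i -> sigma (Cw i) = Cw i.+1.
Proof. case: i => // i _; by rewrite /Cw /= iterS. Qed.

Lemma sigma_flatten_nseq n w : sigma (flatten (nseq n w)) = flatten (nseq n (sigma w)).
Proof. elim: n => [|n IH] //=; by rewrite sigma_cat IH. Qed.

Lemma Cblock_S k i : 1 <= i -> sigma (Cblock k i) = Cblock k i.+1.
Proof. move=> hi; by rewrite /Cblock sigma_flatten_nseq Cw_S. Qed.

Lemma cprefix_S k m : cprefix k m.+1 = cprefix k m ++ Cblock k m.+1.
Proof.
rewrite /cprefix -[m.+1]addn1 iotaD map_cat flatten_cat /= cats0; do 2 f_equal; lia.
Qed.

Lemma flatten_nseq1 k : flatten (nseq k [:: 1]) = nseq k 1.
Proof. by elim: k => //= k ->. Qed.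

Lemma cprefix_sig k m : cprefix k m.+1 = nseq k 1 ++ sigma (cprefix k m).
Proof.
elim: m => [|m IH].
  by rewrite /cprefix /= cats0 cats0 /Cblock /Cw /= flatten_nseq1.
rewrite (cprefix_S k m.+1) {1}IH -catA (cprefix_S k m) sigma_cat Cblock_S //.
Qed.

Lemma cprefix_all k m : all in12 (cprefix k m).
Proof.
case: m => [|m]; first by [].
rewrite cprefix_sig all_cat sigma_all andbT; by elim: k.
Qed.

Lemma size_sigma s : size s <= size (sigma s).
Proof. elim: s => //= e s IH; rewrite sigma_cons size_cat; case: ifP => /= _; lia. Qed.

Lemma size_cprefix k m : 1 <= k -> m <= size (cprefix k m).
Proof.
move=> hk; elim: m => // m IH.
rewrite cprefix_sig size_cat size_nseq; have := size_sigma (cprefix k m); lia.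
Qed.

Lemma cprefix_ext k m n : exists t, cprefix k (m + n) = cprefix k m ++ t.
Proof.
elim: n => [|n [t IH]]; first by exists [::]; rewrite addn0 cats0.
exists (t ++ Cblock k (m + n).+1); by rewrite addnS cprefix_S IH catA.
Qed.

Lemma nth_ext k m n i : i < size (cprefix k m) ->
  nth 0 (cprefix k (m + n)) i = nth 0 (cprefix k m) i.
Proof. move=> h; have [t ->] := cprefix_ext k m n; by rewrite nth_cat h. Qed.

Definition W k i := nth 0 (cprefix k i.+1) i.
Definition S k m := \sum_(j < m) W k j.

Lemma W_eq k M i : 1 <= k -> i < size (cprefix k M) -> nth 0 (cprefix k M) i = W k i.
Proof.
move=> hk h; rewrite /W; case: (leqP i.+1 M) => hM.
  rewrite -(subnKC hM) nth_ext //; have := size_cprefix i.+1 hk; lia.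
have hM' : M <= i.+1 by lia.
by rewrite -(subnKC hM') nth_ext.
Qed.

Lemma W_in12 k i : 1 <= k -> in12 (W k i).
Proof.
move=> hk; rewrite /W; apply: (all_nthP 0 (cprefix_all k i.+1)).
have := size_cprefix i.+1 hk; lia.
Qed.

Lemma W_bounds k i : 1 <= k -> 1 <= W k i <= 2.
Proof. move=> hk; have := W_in12 i hk; rewrite /in12; case/orP=> /eqP ->; lia. Qed.

Lemma S_S k m : S k m.+1 = S k m + W k m.
Proof. by rewrite /S big_ord_recr. Qed.

Lemma sumn_take_big s m : m <= size s -> sumn (take m s) = \sum_(j < m) nth 0 s j.
Proof.
elim: m => [|m IH] h; first by rewrite take0 big_ord0.
by rewrite (take_nth 0) // sumn_rcons IH ?big_ord_recr //; lia.
Qed.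

Lemma S_take k M m : 1 <= k -> m <= size (cprefix k M) -> sumn (take m (cprefix k M)) = S k m.
Proof.
move=> hk h; rewrite sumn_take_big // /S; apply: eq_bigr => j _; apply: W_eq => //.
have := ltn_ord j; lia.
Qed.

Lemma W_small k i : 1 <= k -> i < k -> W k i = 1.
Proof. move=> hk hi; by rewrite /W cprefix_sig nth_cat size_nseq hi nth_nseq hi. Qed.

Lemma sigma_nth L m : all in12 L -> m < size L ->
  nth 0 (sigma L) (sumn (take m L)) = 2 /\
  (nth 0 L m = 2 -> nth 0 (sigma L) (sumn (take m L)).+1 = 1).
Proof.
elim: L m => [|e L IH] m //= /andP [he hL] hm.
rewrite sigma_cons; case: m hm => [|m] hm /=.
  move: he; rewrite /in12; case/orP=> /eqP -> //.
rewrite nth_cat; have hs : size (if e == 1 then [:: 2] else [:: 2; 1]) = e.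
  move: he; rewrite /in12; case/orP=> /eqP -> //.
rewrite hs ltnNge leq_addr /= addKn.
have := IH m hL hm => -[h1 h2]; split => // h3.
by rewrite -addnS nth_cat hs ltnNge leq_addr /= addKn h2.
Qed.

Lemma nth2_size s i v : nth 0 s i = v -> 0 < v -> i < size s.
Proof. move=> h hv; rewrite ltnNge; apply/negP => hs; move: h; rewrite nth_default //; lia. Qed.

Lemma W_sig k m : 1 <= k -> W k (k + S k m) = 2 /\ (W k m = 2 -> W k (k + S k m).+1 = 1).
Proof.
move=> hk.
have hsz := size_cprefix m.+1 hk.
have := @sigma_nth _ m (cprefix_all k m.+1) hsz => -[h1 h2].
rewrite S_take in h1 h2 => //; last lia.
have e1 : forall j, nth 0 (sigma (cprefix k m.+1)) j = nth 0 (cprefix k m.+2) (k + j).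
  by move=> j; rewrite (cprefix_sig k m.+1) nth_cat size_nseq ltnNge leq_addr /= addKn.
rewrite e1 in h1; rewrite e1 in h2.
rewrite -(W_eq (M:=m.+2)) //; last exact: nth2_size h1 _.
split => // hW.
have h2' := h2 hW.
rewrite -addnS -(W_eq (M:=m.+2)) //; exact: nth2_size h2' _.
Qed.

Lemma S_k k : 1 <= k -> S k k = k.
Proof.
move=> hk; rewrite /S (eq_bigr (fun _ => 1)) ?sum1_card ?card_ord // => i _.
by rewrite W_small.
Qed.


Lemma S_mono k i j : 1 <= k -> i < j -> S k i + (j - i) <= S k j.
Proof.
move=> hk; elim: j => // j IH hij; rewrite S_S; have := W_bounds j hk.
case: (ltngtP i j) => h; [have := IH h; lia | lia | subst; lia].
Qed.

Lemma SA k m : 1 <= k -> S k (k + S k m) = k + m + S k m.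
Proof.
move=> hk; elim: m => [|m IH]; first (have e0 : S k 0 = 0 by rewrite /S big_ord0); first by rewrite e0 !addn0 S_k.
have [h1 h2] := W_sig m hk.
rewrite S_S; have := W_bounds m hk => hb.
have [e|e] : W k m = 1 \/ W k m = 2 by lia.
  by rewrite e (addnA k (S k m) 1) addn1 S_S IH h1; lia.
by rewrite e (addnA k (S k m) 2) addn2 S_S S_S IH h1 (h2 e); lia.
Qed.

Lemma S_locate k q : 1 <= k -> exists m, S k m <= q < S k m.+1.
Proof.
move=> hk; elim: q => [|q [m IH]].
  by exists 0; rewrite S_S /S big_ord0; have := W_bounds 0 hk; lia.
case: (ltnP q.+1 (S k m.+1)) => h; first by exists m; lia.
exists m.+1; rewrite (S_S k m.+1); have := W_bounds m.+1 hk; lia.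
Qed.

Lemma W2pos k p : 1 <= k -> W k p = 2 -> exists m, p = k + S k m.
Proof.
move=> hk hp.
have hpk : k <= p by case: (ltnP p k) => // h; rewrite W_small in hp.
have [m hm] := S_locate (p - k) hk.
exists m; move: hm; rewrite S_S; have := W_bounds m hk => hb hm.
case: (eqVneq (S k m) (p - k)) => e; first lia.
have ew : W k m = 2 by lia.
have ep : p = (k + S k m).+1 by lia.
have [_ h2] := W_sig m hk; move: hp; rewrite ep (h2 ew) //.
Qed.

Definition A k m := k + 1 + S k m.
Definition B k m := 2 * k + 2 + m + S k m.

Lemma BA k m : B k m = A k m + k + m + 1.
Proof. rewrite /A /B; lia. Qed.

Lemma A_lt k i j : 1 <= k -> i < j -> A k i < A k j.
Proof. move=> hk h; have := S_mono hk h; rewrite /A; lia. Qed.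

Lemma A_le k i j : 1 <= k -> i <= j -> A k i <= A k j.
Proof. move=> hk; rewrite leq_eqVlt => /orP [/eqP -> // | h]; exact/ltnW/A_lt. Qed.

Lemma A_inj k i j : 1 <= k -> A k i = A k j -> i = j.
Proof. move=> hk e; case: (ltngtP i j) => // h; have := A_lt hk h; lia. Qed.

Lemma B_inj k i j : 1 <= k -> B k i = B k j -> i = j.
Proof. move=> hk e; case: (ltngtP i j) => // h; have := A_lt hk h; rewrite !BA in e *; lia. Qed.

Lemma B_as_A k m : 1 <= k -> B k m = A k (k + S k m) + 1.
Proof. move=> hk; rewrite /A /B SA //; lia. Qed.

Lemma AB_disj k i j : 1 <= k -> A k i <> B k j.
Proof.
move=> hk e.
have [h1 _] := W_sig j hk.
set p := k + S k j in h1.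
have ep : A k p.+1 = A k p + 2 by rewrite /A S_S h1; lia.
have eb := B_as_A j hk; rewrite -/p in eb.
case: (leqP i p) => h.
  have := A_le hk h; lia.
have := A_le hk h; lia.
Qed.

Lemma coverAB k v : 1 <= k -> k < v -> (exists m, v = A k m) \/ (exists m, v = B k m).
Proof.
move=> hk hv.
have [m hm] := S_locate (v - k - 1) hk.
move: hm; rewrite S_S; have := W_bounds m hk => hb hm.
case: (eqVneq (S k m) (v - k - 1)) => e; first by left; exists m; rewrite /A; lia.
right; have ew : W k m = 2 by lia.
have [m' em] := W2pos hk ew.
exists m'; rewrite B_as_A // -em /A; lia.
Qed.

Lemma mem_moves x y p : p \in queen_moves x y <->
  (exists u, u < x /\ p = (u, y)) \/ (exists v, v < y /\ p = (x, v)) \/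
  (exists t, 1 <= t <= minn x y /\ p = (x - t, y - t)).
Proof.
rewrite /queen_moves !mem_cat; split.
  case/orP => [/mapP [u] | /orP [] /mapP [u]]; rewrite mem_iota => hu ->.
  - left; exists u; split => //; lia.
  - right; left; exists u; split => //; lia.
  - right; right; exists u; split => //; lia.
case => [[u [hu ->]] | [[v [hv ->]] | [t [ht ->]]]].
- by apply/orP; left; apply/mapP; exists u; rewrite // mem_iota; lia.
- by apply/orP; right; apply/orP; left; apply/mapP; exists v; rewrite // mem_iota; lia.
- by apply/orP; right; apply/orP; right; apply/mapP; exists t; rewrite // mem_iota; lia.
Qed.

Lemma move_dec x y p : p \in queen_moves x y -> p.1 + p.2 < x + y.
Proof.
move/mem_moves => [[u [hu ->]] | [[v [hv ->]] | [t [ht ->]]]] /=; lia.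
Qed.

Lemma move_swap x y u v : (u, v) \in queen_moves x y -> (v, u) \in queen_moves y x.
Proof.
move/mem_moves => [[u' [hu [-> ->]]] | [[v' [hv [-> ->]]] | [t [ht [-> ->]]]]]; apply/mem_moves.
- by right; left; exists u'.
- by left; exists v'.
- by right; right; exists t; split => //; rewrite minnC.
Qed.

Lemma fuel_stable k f g x y : x + y <= f -> x + y <= g ->
  isP_fuel k f x y = isP_fuel k g x y.
Proof.
elim: f g x y => [|f IH] g x y hf hg.
  have [-> ->] : x = 0 /\ y = 0 by lia.
  by case: g hg => //=; rewrite /terminal.
case: g hg => [|g] hg /=.
  have [-> ->] : x = 0 /\ y = 0 by lia.
  by rewrite /terminal.
case: ifP => // _; apply: eq_in_all => p hp.
have := move_dec hp; case: p hp => u v hp /= h; rewrite (IH g) //; lia.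
Qed.

Lemma isP_unfold k x y : ~~ terminal k x y ->
  isP k x y = all (fun p => ~~ isP k p.1 p.2) (queen_moves x y).
Proof.
move=> ht; rewrite /isP.
have : 0 < x + y by move: ht; rewrite /terminal; lia.
case e: (x + y) => [|f] // _ /=.
rewrite (negbTE ht); apply: eq_in_all => p hp.
have := move_dec hp; rewrite e => h.
by rewrite (fuel_stable k (g:=p.1+p.2)) //; lia.
Qed.

Definition inS k x y : Prop := x + y <= k \/ exists m, (x, y) = (B k m, A k m) \/ (x, y) = (A k m, B k m).

Lemma inS_swap k x y : inS k x y -> inS k y x.
Proof.
case => [h | [m [[-> ->] | [-> ->]]]]; [left; lia | right; exists m; by right | right; exists m; by left].
Qed.

Lemma noexit k m p : 1 <= k -> p \in queen_moves (A k m) (B k m) -> ~ inS k p.1 p.2.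
Proof.
move=> hk hp.
have hAk : k < A k m by rewrite /A; lia.
have hBA := BA k m.
move/mem_moves: hp => [[u [hu ->]] | [[v [hv ->]] | [t [ht ->]]]] /=.
- case => [|[j [[e1 e2] | [e1 e2]]]]; first lia.
  + exact: (AB_disj hk (esym e2)).
  + have := B_inj hk e2 => ej; subst; lia.
- case => [|[j [[e1 e2] | [e1 e2]]]]; first lia.
  + exact: (AB_disj hk e1).
  + have := A_inj hk e1 => ej; subst; lia.
- have hmin : minn (A k m) (B k m) = A k m by apply/minn_idPl; lia.
  rewrite hmin in ht.
  case => [|[j [[e1 e2] | [e1 e2]]]]; first lia.
  + have := BA k j; lia.
  + have := BA k j => hj.
    have ejm : j = m by lia.
    subst; lia.
Qed.

Lemma exit k x y : 1 <= k -> x <= y -> ~ inS k x y -> k < x + y ->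
  exists p, p \in queen_moves x y /\ inS k p.1 p.2.
Proof.
move=> hk hxy hS hs.
case: (leqP x k) => hx.
  exists (x, 0); split; last by left => /=; lia.
  apply/mem_moves; right; left; exists 0; split => //; lia.
case: (leqP (y - x) k) => hd.
  exists (0, y - x); split; last by left => /=; lia.
  apply/mem_moves; right; right; exists x; split; first by apply/andP; split; [lia | rewrite leq_min; apply/andP; split; lia].
  by rewrite subnn.
case: (coverAB hk hx) => [[m em] | [m em]]; subst x.
- have hBA := BA k m.
  case: (ltngtP y (B k m)) => hy.
  + have [j hj] : exists j, y - A k m = k + j + 1 /\ j < m by exists (y - A k m - k - 1); lia.
    case: hj => hj1 hj2.
    have hlt := A_lt hk hj2.
    exists (A k j, B k j); split; last by right; exists j; right.
    apply/mem_moves; right; right; exists (A k m - A k j).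
    have hBj := BA k j.
    split; first by apply/andP; split; [lia | rewrite leq_min; apply/andP; split; lia].
    congr pair; lia.
  + exists (A k m, B k m); split; last by right; exists m; right.
    apply/mem_moves; right; left; exists (B k m); split => //.
  + by exfalso; apply: hS; right; exists m; right; rewrite hy.
- have hBA := BA k m.
  exists (B k m, A k m); split; last by right; exists m; left.
  apply/mem_moves; right; left; exists (A k m); split => //; lia.
Qed.

Lemma main k x y : 1 <= k -> (isP k x y <-> inS k x y).
Proof.
move=> hk.
have : forall N x y, x + y < N -> (isP k x y <-> inS k x y); last by apply; exact: ltnSn.
elim => [|N IH] {}x {}y hN; first lia.
case: (boolP (terminal k x y)) => ht.
  split=> _; last by rewrite /isP; case: (x + y) => [|f] /=; rewrite ht.
  by left; move: ht; rewrite /terminal.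
have hs : k < x + y by move: ht; rewrite /terminal; lia.
rewrite isP_unfold //.
have IHm : forall p, p \in queen_moves x y -> (isP k p.1 p.2 <-> inS k p.1 p.2).
  by move=> p hp; apply: IH; have := move_dec hp; case: p hp => u v hp /=; lia.
split.
- move=> hall; apply: NNPP => hS.
  have [p [hp hpS]] : exists p, p \in queen_moves x y /\ inS k p.1 p.2.
    case: (leqP x y) => hxy; first exact: exit.
    have hS' : ~ inS k y x by move=> h; apply: hS; exact: inS_swap.
    have hs' : k < y + x by rewrite addnC.
    have [[u v] [hp hpS]] := exit hk (ltnW hxy) hS' hs'.
    exists (v, u); split; first exact: move_swap.
    exact: inS_swap.
  move/allP: hall => /(_ p hp) /=; rewrite (proj2 (IHm p hp) hpS) //.
- move=> hS; apply/allP => p hp; apply/negP => hP.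
  have hpS := proj1 (IHm p hp) hP.
  case: hS => [|[m [e | e]]]; first lia.
  + case: e => ex ey; subst x y.
    case: p hp hP hpS => u v hp _ hpS.
    have hp' := move_swap hp.
    exact: (noexit hk hp' (inS_swap hpS)).
  + case: e => ex ey; subst x y.
    exact: (noexit hk hp hpS).
Qed.

Lemma sumc k n : \sum_(1 <= i < n.+1) c k i = S k n.
Proof.
elim: n => [|n IH]; first by rewrite big_geq // /S big_ord0.
by rewrite big_nat_recr // IH S_S.
Qed.

Lemma sumd k n : \sum_(1 <= i < n.+1) d k i = S k n + n.
Proof.
elim: n => [|n IH]; first by rewrite big_geq // /S big_ord0.
rewrite big_nat_recr // IH S_S /d; have -> : c k n.+1 = W k n by [].
rewrite /=; lia.
Qed.

Lemma aA k n : a k n.+1 = A k n.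
Proof. by rewrite /a sumc. Qed.

Lemma bB k n : b k n.+1 = B k n.
Proof. rewrite /b sumd /B; lia. Qed.

Theorem theorem5p3 (k : nat) (hk : 1 <= k) (x y : nat) :
  isP k x y <->
  (x + y <= k \/
   exists n, 1 <= n /\ ((x, y) = (b k n, a k n) \/ (x, y) = (a k n, b k n))).
Proof.
rewrite main //; split.
- case => [h | [m hm]]; [by left | right; exists m.+1; by rewrite aA bB].
- case => [h | [[|n] [hn hm]]]; [by left | by [] | right; exists n; by rewrite -aA -bB].
Qed.
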